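(* Let $\Bbbk$ be a commutative ring. The negative-one shift functor $\widetilde{S}_{-1}:\mathrm{FI}\text{-}\mathrm{Mod}\to\mathrm{FI}\text{-}\mathrm{Mod}$ is a left adjoint of the shift functor $S:\mathrm{FI}\text{-}\mathrm{Mod}\to\mathrm{FI}\text{-}\mathrm{Mod}$; that is, there is an isomorphism $\mathrm{Hom}_{\mathrm{FI}\text{-}\mathrm{Mod}}(\widetilde{S}_{-1}V,W)\cong \mathrm{Hom}_{\mathrm{FI}\text{-}\mathrm{Mod}}(V,SW)$ natural in the $\mathrm{FI}$-modules $V$ and $W$.
   Context: $\mathrm{FI}$ is the category whose objects are finite sets and whose morphisms are injective maps. An $\mathrm{FI}$-module is a functor from $\mathrm{FI}$ to the category of $\Bbbk$-modules; homomorphisms are natural transformations; $\mathrm{FI}\text{-}\mathrm{Mod}$ denotes this category. For an $\mathrm{FI}$-module $V$ and a finite set $X$ write $V_X=V(X)$, and for an injection $f$ write $f_*=V(f)$. Fix a one-element set $\{\star\}$. The shift functor is $SV=V\circ\sigma$, where $\sigma:\mathrm{FI}\to\mathrm{FI}$ sends $X\mapsto X\sqcup\{\star\}$ and $f\mapsto f\sqcup \mathrm{id}_{\{\star\}}$; so $(SV)_X=V_{X\sqcup\{\star\}}$. The negative-one shift functor is defined by $(\widetilde{S}_{-1}V)_X=\bigoplus_{x\in X}V_{X\setminus\{x\}}$, and for an injection $f:X\to Y$, the map $f_*:(\widetilde{S}_{-1}V)_X\to(\widetilde{S}_{-1}V)_Y$ restricts on the summand $V_{X\setminus\{x\}}$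 to $(f|_{X\setminus\{x\}})_*:V_{X\setminus\{x\}}\to V_{Y\setminus\{f(x)\}}$ (landing in the summand indexed by $f(x)$); on homomorphisms it acts componentwise. *)

(* Defs.v *)
From HB Require Import structures.
From mathcomp Require Import all_boot all_order all_algebra.
Set Implicit Arguments. Unset Strict Implicit. Unset Printing Implicit Defensive.
Import GRing.Theory.
Local Open Scope ring_scope.

Section DSum.
Variables (R : pzRingType) (I : finType) (T : I -> lmodType R).

Definition dsum := {dffun forall i : I, T i}.
HB.instance Definition _ := Choice.on dsum.

Definition dsum_zero : dsum := [ffun i => (0 : T i)].
Definition dsum_add (s t : dsum) : dsum := [ffun i => s i + t i].
Definition dsum_opp (s : dsum) : dsum := [ffun i => - s i].
Definition dsum_scale (a : R) (s : dsum) : dsum := [ffun i => a *: s i].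

Lemma dsum_addA : associative dsum_add.
Proof. by move=> s t u; apply/ffunP => i; rewrite !ffunE addrA. Qed.
Lemma dsum_addC : commutative dsum_add.
Proof. by move=> s t; apply/ffunP => i; rewrite !ffunE addrC. Qed.
Lemma dsum_add0 : left_id dsum_zero dsum_add.
Proof. by move=> s; apply/ffunP => i; rewrite !ffunE add0r. Qed.
Lemma dsum_addN : left_inverse dsum_zero dsum_opp dsum_add.
Proof. by move=> s; apply/ffunP => i; rewrite !ffunE addNr. Qed.

HB.instance Definition _ :=
  GRing.isZmodule.Build dsum dsum_addA dsum_addC dsum_add0 dsum_addN.

Lemma dsum_scaleA a b (s : dsum) :
  dsum_scale a (dsum_scale b s) = dsum_scale (a * b) s.
Proof. by apply/ffunP => i; rewrite !ffunE scalerA. Qed.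
Lemma dsum_scale1 : left_id 1 dsum_scale.
Proof. by move=> s; apply/ffunP => i; rewrite !ffunE scale1r. Qed.
Lemma dsum_scaleDr : right_distributive dsum_scale +%R.
Proof. by move=> a s t; apply/ffunP => i; rewrite !ffunE scalerDr. Qed.
Lemma dsum_scaleDl (s : dsum) :
  {morph dsum_scale^~ s : a b / a + b}.
Proof. by move=> a b; apply/ffunP => i; rewrite !ffunE scalerDl. Qed.

HB.instance Definition _ :=
  GRing.Zmodule_isLmodule.Build R dsum dsum_scaleA dsum_scale1
    dsum_scaleDr dsum_scaleDl.
End DSum.

Unset Implicit Arguments.
Record Inj (X Y : finType) := { inj_fun :> X -> Y ; inj_inj : injective inj_fun }.
Arguments inj_fun {X Y} i _.
Arguments inj_inj {X Y} i _ _ _.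

Definition inj_id (X : finType) : Inj X X := Build_Inj X X id (@inj_id X).
Definition inj_comp {X Y Z : finType} (f : Inj X Y) (g : Inj Y Z) : Inj X Z :=
  Build_Inj X Z (g \o f) (inj_comp (inj_inj g) (inj_inj f)).

Definition sum1_fun {X Y : finType} (f : X -> Y) (z : (X + unit)%type) :
  (Y + unit)%type := match z with inl x => inl (f x) | inr u => inr u end.
Lemma sum1_inj {X Y : finType} (f : Inj X Y) : injective (sum1_fun f).
Proof.
case=> [x|[]] [y|[]] //= [].
by move=> /(inj_inj f) ->.
Qed.
Definition inj_sum1 {X Y : finType} (f : Inj X Y) : Inj (X + unit)%type (Y + unit)%type :=
  Build_Inj _ _ (sum1_fun f) (sum1_inj f).

Definition minus1 {X : finType} (x : X) : finType := {y : X | y != x}.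

Definition restr_fun {X Y : finType} (f : Inj X Y) (x : X) (y : minus1 x) :
  minus1 (f x).
Proof.
exists (f (val y)); rewrite (inj_eq (inj_inj f)); exact: valP y.
Defined.
Lemma restr_inj {X Y : finType} (f : Inj X Y) (x : X) : injective (restr_fun f x).
Proof.
move=> y1 y2 /(congr1 val) /= /(inj_inj f) e; exact: val_inj.
Qed.
Definition inj_restr {X Y : finType} (f : Inj X Y) (x : X) : Inj (minus1 x) (minus1 (f x)) :=
  Build_Inj _ _ (restr_fun f x) (restr_inj f x).

Section FIMod.
Variable R : comPzRingType.

Record FIData := {
  fobj : finType -> lmodType R ;
  fmap : forall (X Y : finType), Inj X Y -> fobj X -> fobj Y }.
Arguments fmap f {X Y} : rename.

Definition IsFIMod (V : FIData) : Prop :=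
  [/\ (forall (X Y : finType) (f : Inj X Y) (a : R) (u v : fobj V X),
         fmap V f (a *: u + v) = a *: fmap V f u + fmap V f v),
      (forall (X : finType) (v : fobj V X), fmap V (inj_id X) v = v) &
      (forall (X Y Z : finType) (f : Inj X Y) (g : Inj Y Z) (v : fobj V X),
         fmap V (inj_comp f g) v = fmap V g (fmap V f v))].

Record FIMod := { fidata :> FIData ; fiax : IsFIMod fidata }.

Record FIHom (V W : FIData) := {
  hfun : forall (X : finType), fobj V X -> fobj W X ;
  hlin : forall (X : finType) (a : R) (u v : fobj V X),
           hfun X (a *: u + v) = a *: hfun X u + hfun X v ;
  hnat : forall (X Y : finType) (f : Inj X Y) (v : fobj V X),
           hfun Y (fmap V f v) = fmap W f (hfun X v) }.
Arguments hfun {V W} f X : rename.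
Arguments hlin {V W} f X : rename.
Arguments hnat {V W} f {X Y} : rename.
Arguments Build_FIHom {V W}.

Definition hcomp_fun {U V W : FIData} (a : FIHom U V) (b : FIHom V W) X (u : fobj U X) :=
  hfun b X (hfun a X u).
Lemma hcomp_lin {U V W : FIData} (a : FIHom U V) (b : FIHom V W) X c (u v : fobj U X) :
  hcomp_fun a b X (c *: u + v) = c *: hcomp_fun a b X u + hcomp_fun a b X v.
Proof. by rewrite /hcomp_fun !hlin. Qed.
Lemma hcomp_nat {U V W : FIData} (a : FIHom U V) (b : FIHom V W) X Y (f : Inj X Y) u :
  hcomp_fun a b Y (fmap U f u) = fmap W f (hcomp_fun a b X u).
Proof. by rewrite /hcomp_fun !hnat. Qed.
Definition hcomp {U V W : FIData} (a : FIHom U V) (b : FIHom V W) : FIHom U W :=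
  Build_FIHom (hcomp_fun a b) (hcomp_lin a b) (hcomp_nat a b).

Definition Shift (V : FIData) : FIData :=
  {| fobj := fun X => fobj V (X + unit)%type ;
     fmap := fun X Y f => fmap V (inj_sum1 f) |}.

Definition ShiftH_fun {V W : FIData} (b : FIHom V W) (X : finType) :
  fobj (Shift V) X -> fobj (Shift W) X := hfun b (X + unit)%type.
Lemma ShiftH_lin {V W : FIData} (b : FIHom V W) X c (u v : fobj (Shift V) X) :
  ShiftH_fun b X (c *: u + v) = c *: ShiftH_fun b X u + ShiftH_fun b X v.
Proof. exact: (hlin b (X + unit)%type). Qed.
Lemma ShiftH_nat {V W : FIData} (b : FIHom V W) X Y (f : Inj X Y) (u : fobj (Shift V) X) :
  ShiftH_fun b Y (fmap (Shift V) f u) = fmap (Shift W) f (ShiftH_fun b X u).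
Proof. exact: (hnat b (inj_sum1 f)). Qed.
Definition ShiftH {V W : FIData} (b : FIHom V W) : FIHom (Shift V) (Shift W) :=
  Build_FIHom (ShiftH_fun b) (ShiftH_lin b) (ShiftH_nat b).

Definition NShift_obj (V : FIData) (X : finType) : lmodType R :=
  dsum (fun x : X => fobj V (minus1 x)).

Definition transp (V : FIData) {Y : finType} {y1 y2 : Y} (e : y1 = y2)
  (v : fobj V (minus1 y1)) : fobj V (minus1 y2) :=
  eq_rect y1 (fun t => fobj V (minus1 t)) v y2 e.

(* the summand indexed by x is sent by (f|_{X\{x}})_* into the summand indexed by f x *)
Definition NShift_map (V : FIData) (X Y : finType) (f : Inj X Y)
  (s : NShift_obj V X) : NShift_obj V Y :=
  [ffun y : Y => \sum_(x : X)
     match f x =P y with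
     | ReflectT e => transp V e (fmap V (inj_restr f x) (s x))
     | ReflectF _ => 0
     end].

Definition NShift (V : FIData) : FIData :=
  {| fobj := NShift_obj V ; fmap := NShift_map V |}.

Definition NShiftH_fun {V W : FIData} (a : FIHom V W) (X : finType)
  (s : fobj (NShift V) X) : fobj (NShift W) X :=
  [ffun x : X => hfun a (minus1 x) (s x)].
Lemma NShiftH_lin {V W : FIData} (a : FIHom V W) X c (u v : fobj (NShift V) X) :
  NShiftH_fun a X (c *: u + v) = c *: NShiftH_fun a X u + NShiftH_fun a X v.
Proof.
apply/ffunP => x; rewrite /NShiftH_fun.
rewrite [LHS]ffunE.
have -> : (c *: u + v) x = c *: u x + v x by rewrite /GRing.add /= /GRing.scale /= !ffunE.
rewrite hlin.
by rewrite /GRing.add /= /GRing.scale /= !ffunE.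
Qed.

Lemma hadd {V W : FIData} (a : FIHom V W) X (u v : fobj V X) :
  hfun a X (u + v) = hfun a X u + hfun a X v.
Proof. by rewrite -[u]scale1r hlin !scale1r. Qed.
Lemma hzero {V W : FIData} (a : FIHom V W) X : hfun a X 0 = 0.
Proof.
have := hadd a X 0 0; rewrite addr0 => /(congr1 (fun t => t - hfun a X 0)).
by rewrite subrr addrK => ->.
Qed.
Lemma hsum {V W : FIData} (a : FIHom V W) X (I : finType) (F : I -> fobj V X) :
  hfun a X (\sum_(i : I) F i) = \sum_(i : I) hfun a X (F i).
Proof.
elim/big_rec2: _ => [|i w1 w2 _ <-]; [exact: hzero | exact: hadd].
Qed.

Lemma NShiftH_nat {V W : FIData} (a : FIHom V W) X Y (f : Inj X Y) (u : fobj (NShift V) X) :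
  NShiftH_fun a Y (fmap (NShift V) f u) = fmap (NShift W) f (NShiftH_fun a X u).
Proof.
apply/ffunP => y; rewrite /NShiftH_fun /= /NShift_map !ffunE hsum.
apply: eq_bigr => x _; rewrite ffunE.
case: (f x =P y) => [e|_]; last exact: hzero.
by destruct e; rewrite /transp /= hnat.
Qed.
Definition NShiftH {V W : FIData} (a : FIHom V W) : FIHom (NShift V) (NShift W) :=
  Build_FIHom (NShiftH_fun a) (NShiftH_lin a) (NShiftH_nat a).

End FIMod.

(* Main.v *)
Require Import Defs.
From HB Require Import structures.
From mathcomp Require Import all_boot all_order all_algebra.
From Stdlib Require Import FunctionalExtensionality ProofIrrelevance.
Import GRing.Theory.
Local Open Scope ring_scope.

Section Adj.
Variable R : comPzRingType.

Local Notation fm V f := (fmap R V _ _ f).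

Lemma inj_ext (X Y : finType) (f g : Inj X Y) : (forall x, f x = g x) -> f = g.
Proof.
case: f g => f fi [g gi] /= e.
have efg : f = g by apply: functional_extensionality.
subst g; f_equal; apply: proof_irrelevance.
Qed.

Lemma fihom_ext (V W : FIData R) (a b : FIHom R V W) :
  (forall X v, hfun R V W a X v = hfun R V W b X v) -> a = b.
Proof.
case: a b => a al an [b bl bn] /= e.
have eab : a = b.
  apply: functional_extensionality_dep => X; apply: functional_extensionality => v; exact: e.
subst b; f_equal; apply: proof_irrelevance.
Qed.

Section M.
Variable V : FIMod R.
Lemma fmap_lin X Y (f : Inj X Y) a (u v : fobj R V X) :
  fm V f (a *: u + v) = a *: fm V f u + fm V f v.
Proof. by case: (fiax R V) => H _ _; apply: H. Qed.
Lemma fmap_id X (v : fobj R V X) : fm V (Defs.inj_id X) v = v.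
Proof. by case: (fiax R V) => _ H _; apply: H. Qed.
Lemma fmap_comp X Y Z (f : Inj X Y) (g : Inj Y Z) (v : fobj R V X) :
  fm V (Defs.inj_comp f g) v = fm V g (fm V f v).
Proof. by case: (fiax R V) => _ _ H; apply: H. Qed.
Lemma fmapD X Y (f : Inj X Y) (u v : fobj R V X) : fm V f (u + v) = fm V f u + fm V f v.
Proof. by rewrite -[u]scale1r fmap_lin !scale1r. Qed.
Lemma fmap0 X Y (f : Inj X Y) : fm V f 0 = 0.
Proof.
have := fmapD _ _ f 0 0; rewrite addr0 => /(congr1 (fun t => t - fm V f 0)).
by rewrite subrr addrK => ->.
Qed.
Lemma fmap_idp X (h : Inj X X) (v : fobj R V X) : (forall x, h x = x) -> fm V h v = v.
Proof. move=> e; rewrite (@inj_ext _ _ h (Defs.inj_id X)) //; exact: fmap_id. Qed.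
Lemma fmap_ext X Y (f g : Inj X Y) (v : fobj R V X) : (forall x, f x = g x) -> fm V f v = fm V g v.
Proof. by move=> e; rewrite (inj_ext _ _ _ _ e). Qed.
End M.

Lemma transpK (V : FIData R) (Y : finType) (y : Y) (e : y = y) v : transp R V e v = v.
Proof. by rewrite (eq_axiomK e). Qed.

Lemma nsD (V : FIData R) X (s t : NShift_obj R V X) x : (s + t) x = s x + t x.
Proof. by rewrite /GRing.add /= ffunE. Qed.
Lemma nsZ (V : FIData R) X a (s : NShift_obj R V X) x : (a *: s) x = a *: s x.
Proof. by rewrite /GRing.scale /= ffunE. Qed.
Lemma ns0 (V : FIData R) X x : (0 : NShift_obj R V X) x = 0.
Proof. by rewrite /GRing.zero /= ffunE. Qed.
Lemma nsSum (V : FIData R) X (I : finType) (F : I -> NShift_obj R V X) x :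
  (\sum_(i : I) F i) x = \sum_(i : I) F i x.
Proof. elim/big_rec2: _ => [|i w1 w2 _ <-]; [exact: ns0 | exact: nsD]. Qed.

Definition delta (V : FIData R) (X : finType) (z : X) (v : fobj R V (minus1 z)) : NShift_obj R V X :=
  [ffun y : X => (match z =P y with ReflectT e => transp R V e v | ReflectF _ => 0 end : fobj R V (minus1 y))].
Arguments delta V {X} z v.

Lemma deltaE (V : FIData R) (X : finType) (z : X) v : delta V z v z = v.
Proof. rewrite /delta ffunE; case: (z =P z) => [e|//]; exact: transpK. Qed.
Lemma deltaNE (V : FIData R) (X : finType) (z y : X) v : z != y -> delta V z v y = 0.
Proof. by move=> /eqP n; rewrite /delta ffunE; case: (z =P y). Qed.

Lemma delta_sum (V : FIData R) X (s : NShift_obj R V X) : \sum_(x : X) delta V x (s x) = s.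
Proof.
apply/ffunP => y; rewrite -/(fun_of_fin _ y) nsSum (bigD1 y) //= deltaE big1 ?addr0 //.
by move=> x nx; apply: deltaNE.
Qed.

Lemma sum_morph (A B : zmodType) (f : A -> B) (fD : forall u v, f (u + v) = f u + f v)
  (I : finType) (F : I -> A) : f (\sum_(i : I) F i) = \sum_(i : I) f (F i).
Proof.
have f0 : f 0 = 0 by apply/(addrI (f 0)); rewrite -fD !addr0.
exact: (big_morph f fD f0).
Qed.

Lemma transp0 (V : FIData R) (Y : finType) (y1 y2 : Y) (e : y1 = y2) : transp R V e 0 = 0.
Proof. by destruct e. Qed.
Lemma transpD (V : FIData R) (Y : finType) (y1 y2 : Y) (e : y1 = y2) u v :
  transp R V e (u + v) = transp R V e u + transp R V e v.
Proof. by destruct e. Qed.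

Lemma nmap_delta (V : FIMod R) X Y (f : Inj X Y) (z : X) (w : fobj R V (minus1 z)) :
  NShift_map R V X Y f (delta V z w) = delta V (f z) (fmap R V _ _ (inj_restr f z) w).
Proof.
apply/ffunP => y; rewrite /NShift_map ffunE (bigD1 z) //= big1 ?addr0.
  by rewrite deltaE /delta ffunE.
move=> x nx; rewrite deltaNE; last by rewrite eq_sym.
by rewrite fmap0; case: (f x =P y) => // e; rewrite transp0.
Qed.

Lemma nmapD (V : FIMod R) X Y (f : Inj X Y) (s t : NShift_obj R V X) :
  NShift_map R V X Y f (s + t) = NShift_map R V X Y f s + NShift_map R V X Y f t.
Proof.
apply/ffunP => y; rewrite nsD /NShift_map !ffunE -big_split /=; apply: eq_bigr => x _.
rewrite nsD fmapD; case: (f x =P y) => [e|_]; [exact: transpD | by rewrite addr0].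
Qed.

Lemma deltaD (V : FIData R) (X : finType) (z : X) a u v :
  delta V z (a *: u + v) = a *: delta V z u + delta V z v.
Proof.
apply/ffunP => y; rewrite nsD nsZ /delta !ffunE.
by case: (z =P y) => [e|_]; [destruct e | rewrite scaler0 addr0].
Qed.

Lemma nshiftH_delta (V W : FIData R) (a : FIHom R V W) (X : finType) (z : X) w :
  NShiftH_fun R a X (delta V z w) = delta W z (hfun R V W a _ w).
Proof.
apply/ffunP => y; rewrite /NShiftH_fun /delta !ffunE.
by case: (z =P y) => [e|_]; [destruct e | exact: hzero].
Qed.

Definition iota_fun (X : finType) (x : X) : minus1 (inr tt : (X + unit)%type) :=
  exist _ (inl x) isT.
Lemma iota_inj (X : finType) : injective (iota_fun X).
Proof. by move=> x y /(congr1 val) [->]. Qed.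
Definition iota (X : finType) := Build_Inj _ _ (iota_fun X) (@iota_inj X).

Definition gx_fun (X : finType) (x : X) (z : (minus1 x + unit)%type) : X :=
  match z with inl y => val y | inr _ => x end.
Arguments gx_fun {X} x z.
Lemma gx_inj (X : finType) (x : X) : injective (gx_fun x).
Proof.
case=> [y1|[]] [y2|[]] //=.
- by move=> e; apply: congr1; apply: val_inj.
- by move=> e; move: (valP y1); rewrite /= e eqxx.
- by move=> e; move: (valP y2); rewrite /= -e eqxx.
Qed.
Definition gx (X : finType) (x : X) := Build_Inj _ _ (gx_fun x) (@gx_inj X x).
Arguments gx {X} x.

Section PhiPsi.
Variables V W : FIMod R.

Definition PhiF (phi : FIHom R (NShift R V) W) (X : finType) (v : fobj R V X) :
  fobj R (Shift R W) X :=
  hfun R _ _ phi (X + unit)%type (delta V (inr tt) (fmap R V _ _ (iota X) v)).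

Lemma PhiF_lin phi X a u v : PhiF phi X (a *: u + v) = a *: PhiF phi X u + PhiF phi X v.
Proof. by rewrite /PhiF fmap_lin deltaD hlin. Qed.

Lemma PhiF_nat phi X Y (f : Inj X Y) v :
  PhiF phi Y (fmap R V _ _ f v) = fmap R (Shift R W) _ _ f (PhiF phi X v).
Proof.
rewrite /PhiF /= -(hnat _ _ _ phi) /= nmap_delta -!fmap_comp.
congr (hfun _ _ _ phi _ (delta V (inr tt) _)).
by apply: fmap_ext => x; apply: val_inj.
Qed.

Definition Phi (phi : FIHom R (NShift R V) W) : FIHom R V (Shift R W) :=
  Build_FIHom R _ _ (PhiF phi) (PhiF_lin phi) (PhiF_nat phi).

Definition PsiF (psi : FIHom R V (Shift R W)) (X : finType) (s : fobj R (NShift R V) X) :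
  fobj R W X :=
  \sum_(x : X) fmap R W _ _ (gx x) (hfun R _ _ psi (minus1 x) (s x)).

Lemma PsiF_lin psi X a u v : PsiF psi X (a *: u + v) = a *: PsiF psi X u + PsiF psi X v.
Proof.
rewrite /PsiF scaler_sumr -big_split /=; apply: eq_bigr => x _.
by rewrite nsD nsZ hlin fmap_lin.
Qed.

Lemma PsiF_delta psi (X : finType) (z : X) u : PsiF psi X (delta V z u) = fmap R W _ _ (gx z) (hfun R _ _ psi _ u).
Proof.
rewrite /PsiF (bigD1 z) //= deltaE big1 ?addr0 // => x nx.
by rewrite deltaNE 1?eq_sym // hzero fmap0.
Qed.

Lemma PsiF_nat psi X Y (f : Inj X Y) s :
  PsiF psi Y (fmap R (NShift R V) _ _ f s) = fmap R W _ _ f (PsiF psi X s).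
Proof.
have PD : forall u v, PsiF psi Y (u + v) = PsiF psi Y u + PsiF psi Y v.
  by move=> u v; have := PsiF_lin psi Y 1 u v; rewrite !scale1r.
rewrite -{1}(delta_sum _ _ s) /=.
rewrite (sum_morph _ _ (NShift_map R V X Y f) (nmapD V X Y f)).
rewrite (sum_morph _ _ (PsiF psi Y) PD) /PsiF (sum_morph _ _ _ (fmapD W X Y f)).
apply: eq_bigr => x _; rewrite nmap_delta -/(PsiF psi Y _) PsiF_delta (hnat _ _ _ psi) /=.
rewrite -!fmap_comp; apply: fmap_ext; by case=> [y|[]].
Qed.

Definition Psi (psi : FIHom R V (Shift R W)) : FIHom R (NShift R V) W :=
  Build_FIHom R _ _ (PsiF psi) (PsiF_lin psi) (PsiF_nat psi).

Lemma PhiK : cancel Phi Psi.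
Proof.
move=> phi; apply: fihom_ext => X s /=.
rewrite /PsiF /PhiF /=.
rewrite -{2}(delta_sum _ _ s) hsum; apply: eq_bigr => x _.
rewrite -(hnat _ _ _ phi) /= nmap_delta -fmap_comp.
congr (hfun _ _ _ phi _ (delta V x _)).
by apply: fmap_idp => y; apply: val_inj.
Qed.

Lemma PsiK : cancel Psi Phi.
Proof.
move=> psi; apply: fihom_ext => X v /=.
rewrite /PhiF /= PsiF_delta (hnat _ _ _ psi) /= -fmap_comp.
by apply: fmap_idp; case=> [y|[]].
Qed.


End PhiPsi.

Lemma Phi_natural (V V' W W' : FIMod R) (alpha : FIHom R V' V) (beta : FIHom R W W')
  (phi : FIHom R (NShift R V) W) :
  Phi V' W' (hcomp R (hcomp R (NShiftH R alpha) phi) beta)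
  = hcomp R (hcomp R alpha (Phi V W phi)) (ShiftH R beta).
Proof.
apply: fihom_ext => X v /=.
rewrite /hcomp_fun /PhiF /ShiftH_fun /= /hcomp_fun /= nshiftH_delta (hnat _ _ _ alpha).
by [].
Qed.
End Adj.

Theorem mainTheorem1 (R : comPzRingType) :
  exists Phi : forall V W : FIMod R, FIHom R (NShift R V) W -> FIHom R V (Shift R W),
    (forall V W : FIMod R, bijective (Phi V W)) /\
    (forall (V V' W W' : FIMod R) (alpha : FIHom R V' V) (beta : FIHom R W W')
            (phi : FIHom R (NShift R V) W),
       Phi V' W' (hcomp R (hcomp R (NShiftH R alpha) phi) beta)
       = hcomp R (hcomp R alpha (Phi V W phi)) (ShiftH R beta)).
Proof.
exists (Phi R); split.
  by move=> V W; exists (Psi R V W); [exact: PhiK | exact: PsiK].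
exact: Phi_natural.
Qed.
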